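(* Let $p\in[0,1)$, $\alpha\in[0,1]$, $0\le h_1<\dots<h_N\le1$, and nonnegative weights $f_0^S(h_j),f_0^{NS}(h_j)$, $j=1,\dots,N$, each summing to $1$; set $f_0(h_j)=\alpha f_0^S(h_j)+(1-\alpha)f_0^{NS}(h_j)$ with $f_0(h_N)>0$, and $f_0([h_i,1])=\sum_{j\ge i}f_0(h_j)$. Let $A=(A_{ij})_{i,j=1}^N$ be the matrix $$A_{ij}=\begin{cases}(1-\alpha)f_0^{NS}(h_i)-\big(p+(1-p)f_0([h_i,1])\big),& i=j,\\ (1-\alpha)\big[p+(1-p)1_{\{j\ge i\}}\big]f_0^{NS}(h_j),& i\ne j.\end{cases}$$ Then every eigenvalue $z\in\mathbb{C}$ of $A$ satisfies $\mathrm{Re}\,z\le-p\alpha-(1-p)\alpha f_0^S(h_N)$.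
   Context: $A$ is the matrix of the linear ODE system satisfied by the mean opinions of non-stubborn individuals at each hierarchy level; $\alpha$ is the fraction of stubborn individuals, $f_0^S(h_j)$ and $f_0^{NS}(h_j)$ the proportions of level $h_j$ within the stubborn and non-stubborn populations. *)

(* Defs.v *)
From HB Require Import structures.
From mathcomp Require Import all_boot all_order all_algebra.
From mathcomp Require Import complex.
Set Implicit Arguments. Unset Strict Implicit. Unset Printing Implicit Defensive.
Import Order.TTheory GRing.Theory Num.Theory.
Local Open Scope ring_scope.

(* Levels h_1 < ... < h_N are indexed by 'I_n.+1 (N = n+1 >= 1, needed for f_0(h_N) > 0). *)

Definition f0 (R : rcfType) (n : nat) (alpha : R) (fS fNS : 'I_n.+1 -> R) (j : 'I_n.+1) : R :=
  alpha * fS j + (1 - alpha) * fNS j.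

Definition f0tail (R : rcfType) (n : nat) (alpha : R) (fS fNS : 'I_n.+1 -> R) (i : 'I_n.+1) : R :=
  \sum_(j < n.+1 | (i <= j)%N) f0 alpha fS fNS j.

Definition Amat (R : rcfType) (n : nat) (p alpha : R) (fS fNS : 'I_n.+1 -> R) : 'M[R]_n.+1 :=
  \matrix_(i, j)
    if i == j then (1 - alpha) * fNS i - (p + (1 - p) * f0tail alpha fS fNS i)
    else (1 - alpha) * (p + (1 - p) * (if (i <= j)%N then 1 else 0)) * fNS j.

(* Main.v *)
Require Import Defs.
From HB Require Import structures.
From mathcomp Require Import all_boot all_order all_algebra.
From mathcomp Require Import complex.
From mathcomp Require Import ring lra.
Import Order.TTheory GRing.Theory Num.Theory.
Local Open Scope ring_scope.
Lemma eig_tr (F : fieldType) n (g : 'M[F]_n) a : eigenvalue g a -> eigenvalue g^T a.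
Proof.
rewrite /eigenvalue /eigenspace !kermx_eq0 !row_free_unit.
by rewrite -[in X in _ -> X]unitmx_tr linearB /= tr_scalar_mx trmxK.
Qed.
Section S. Variable R : rcfType.
Lemma normR (x : R[i]) : `|x| = (complex.Re `|x|)%:C%C.
Proof. by rewrite normc_def. Qed.
Lemma Re_le_norm (x : R[i]) : complex.Re x <= complex.Re `|x|.
Proof.
rewrite normc_def /=.
apply: le_trans (ler_norm _) _.
by rewrite -sqrtr_sqr ler_wsqrtr // lerDl sqr_ge0.
Qed.
Lemma Re_norm_ge0 (x : R[i]) : 0 <= complex.Re `|x|.
Proof. by have := normr_ge0 x; rewrite lecE => /andP[]. Qed.

Lemma gersh n (A : 'M[R]_n.+1) (z : R[i]) :
  (forall i j, i != j -> 0 <= A i j) ->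
  eigenvalue (map_mx (fun x : R => x%:C%C) A) z ->
  exists j, complex.Re z <= A j j + \sum_(i | i != j) A j i.
Proof.
move=> H /eig_tr /eigenvalueP [v Hv vn0].
pose r i := complex.Re `|v 0 i|.
have [j _ jmax] : exists2 j, true & forall i, r i <= r j.
  by case: (@arg_maxP _ _ _ ord0 xpredT r isT) => j _ jm; exists j => // i; apply: jm.
exists j.
have := Hv; move/rowP/(_ j) => Ej; rewrite !mxE in Ej.
move: Ej; under eq_bigr => i _ do rewrite !mxE; move=> Ej.
have rpos : 0 < r j.
  rewrite lt_def Re_norm_ge0 andbT; apply/negP => /eqP rj0; apply/negP: vn0; apply/negPn.
  apply/eqP/rowP => i; rewrite mxE; apply/eqP; rewrite -normr_eq0 normR.
  have ri0 : r i = 0 by apply/le_anti; rewrite -{1}rj0 jmax Re_norm_ge0.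
  by rewrite /r in ri0; rewrite ri0.
rewrite (bigD1 j) //= in Ej.
have E2 : (z - (A j j)%:C%C) * v 0 j = \sum_(i | i != j) v 0 i * (A j i)%:C%C.
  by rewrite mulrBl -Ej mulrC addrAC subrr add0r.
have N1 : `|z - (A j j)%:C%C| * `|v 0 j| <= \sum_(i | i != j) `|v 0 i| * (A j i)%:C%C.
  rewrite -normrM E2; apply: le_trans (ler_norm_sum _ _ _) _.
  apply: ler_sum => i ij; rewrite normrM [`|(A j i)%:C%C|]ger0_norm ?ler0c //; by apply: H; rewrite eq_sym.
rewrite [`|z - _|]normR [`|v 0 j|]normR -rmorphM /= in N1.
move: N1; under eq_bigr => i _ do rewrite normR -rmorphM /=; move=> N1.
rewrite -rmorph_sum lecR /= in N1.
have N2 : complex.Re `|z - (A j j)%:C%C| * r j <= (\sum_(i | i != j) A j i) * r j.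
  apply: le_trans N1 _; rewrite mulr_suml; apply: ler_sum => i ij.
  rewrite mulrC ler_wpM2l //; [by apply: H; rewrite eq_sym | exact: jmax].
rewrite ler_pM2r // in N2.
have := Re_le_norm (z - (A j j)%:C%C).
move=> N3; have := le_trans N3 N2.
by case: z {Hv Ej E2 N1 N2 N3} => a b /=; rewrite lerBlDl.
Qed.
End S.

Lemma rowsum (R : rcfType) (n : nat) (p alpha : R) (fS fNS : 'I_n.+1 -> R) (j : 'I_n.+1) :
  \sum_(j < n.+1) fNS j = 1 ->
  Amat p alpha fS fNS j j + \sum_(i | i != j) Amat p alpha fS fNS j i =
  - (p * alpha) - (1 - p) * alpha * \sum_(i < n.+1 | (j <= i)%N) fS i.
Proof.
move=> sNS.
have -> : Amat p alpha fS fNS j j + \sum_(i | i != j) Amat p alpha fS fNS j i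
   = \sum_i Amat p alpha fS fNS j i by rewrite [RHS](bigD1 j).
have E : forall i, Amat p alpha fS fNS j i =
   (1 - alpha) * p * fNS i + (if (j <= i)%N then (1 - alpha) * (1 - p) * fNS i else 0)
   - (if i == j then p + (1 - p) * f0tail alpha fS fNS j else 0).
  move=> i; rewrite mxE eq_sym; case: eqP => [->|_]; rewrite ?leqnn /=.
    ring.
  by case: ifP => _; ring.
under eq_bigr => i _ do rewrite E.
rewrite sumrB big_split /= -!big_mkcond /= big_pred1_eq -!mulr_sumr sNS.
rewrite /f0tail /f0 big_split /= -!mulr_sumr.
ring.
Qed.

Theorem proposition4p5 (R : rcfType) (n : nat) (p alpha : R)
  (h : 'I_n.+1 -> R) (fS fNS : 'I_n.+1 -> R) :
  0 <= p -> p < 1 ->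
  0 <= alpha -> alpha <= 1 ->
  (forall i, 0 <= h i) -> (forall i, h i <= 1) ->
  (forall i j : 'I_n.+1, (i < j)%N -> h i < h j) ->
  (forall j, 0 <= fS j) -> (forall j, 0 <= fNS j) ->
  \sum_(j < n.+1) fS j = 1 -> \sum_(j < n.+1) fNS j = 1 ->
  0 < f0 alpha fS fNS ord_max ->
  forall z : R[i],
    eigenvalue (map_mx (fun x : R => x%:C%C) (Amat p alpha fS fNS)) z ->
    complex.Re z <= - (p * alpha) - (1 - p) * alpha * fS ord_max.
Proof.
move=> p0 p1 a0 a1 _ _ _ fS0 fNS0 _ sNS _ z ez.
have offd : forall i k, i != k -> 0 <= Amat p alpha fS fNS i k.
  move=> i k /negbTE ik; rewrite mxE ik.
  apply: mulr_ge0 => //; apply: mulr_ge0; first by rewrite subr_ge0.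
  apply: addr_ge0 => //; apply: mulr_ge0; first by rewrite subr_ge0 ltW.
  by case: ifP.
have [j Hj] := @gersh _ _ _ z offd ez.
apply: le_trans Hj _; rewrite rowsum //.
rewrite lerD2l lerN2 ler_wpM2l ?mulr_ge0 ?subr_ge0 ?(ltW p1) //.
rewrite (bigD1 ord_max) ?leq_ord //= lerDl.
by apply: sumr_ge0 => i _.
Qed.
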